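(* Let $X$ be a multitype Galton–Watson tree with offspring kernel $\mathbb Q$ on a finite alphabet $\mathcal X$. Assume that $(\tilde L_X,M_X)$, conditioned on $\{|T|=n\}$, satisfies a large deviation principle (as $n\to\infty$, speed $n$) in $\mathcal M_s$ with the convex, good rate function $$\widetilde J(\varpi,\nu)=\begin{cases}H(\nu\,\|\,\nu_1\otimes\mathbb Q)&\text{if }\varpi_2=\nu_1,\\ \infty&\text{otherwise.}\end{cases}$$ Then $(\tilde L_X,M_X)$ conditioned on $\{|T|=n\}$ satisfies the large deviation principle in $\tilde{\mathcal M}(\mathcal X\times\mathcal X)\times\mathcal M(\mathcal X\times\mathcal X^* )$ with the convex, good rate function $J(\varpi,\nu)=H(\nu\,\|\,\nu_1\otimes\mathbb Q)$ if $(\varpi,\nu)$ is sub-consistent and $\varpi_2=\nu_1$, and $J(\varpi,\nu)=\infty$ otherwise.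
   Context: $\mathcal X^*=\bigcup_{n\ge0}\{n\}\times\mathcal X^n$, elements $c=(n,a_1,\dots,a_n)$, $m(a,c)=\sum_{i}\mathbf 1\{a_i=a\}$. The multitype Galton–Watson tree: root type from an initial law $\mu$; each vertex $v$ of type $a$ independently has children number and types $C(v)=(N(v),X_1(v),\dots,X_{N(v)}(v))\sim\mathbb Q\{\cdot\mid a\}$. $M_X(a,c)=\frac1{|T|}\sum_v\delta_{(X(v),C(v))}(a,c)$; $\tilde L_X(a,b)=\frac1{|T|}\sum_{e\in E}\delta_{(X(e_1),X(e_2))}(a,b)$ (edges oriented away from the root, $e_1$ parent, $e_2$ child). $\tilde{\mathcal M}(\mathcal X\times\mathcal X)$: finite measures; $\mathcal M(\mathcal X\times\mathcal X^* )$: probability measures $\nu$ with $\int n\,d\nu<\infty$; weak topology. $(\varpi,\nu)$ is sub-consistent if $\varpi(a,b)\ge\sum_c m(b,c)\nu(a,c)$ for all $a,b$; $\mathcal M_s$ is the set of sub-consistent pairs, with the subspace topology. $\nu_1$: $\mathcal X$-marginal of $\nu$; $\varpi_2$: second marginal of $\varpi$; $\nu_1\otimes\mathbb Q(a,c)=\nu_1(a)\mathbb Q\{c\mid a\}$; $H$ relative entropy. *)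

(* Defs.v *)
From HB Require Import structures.
From mathcomp Require Import all_boot all_order all_algebra.
From mathcomp Require Import all_classical all_reals.
From mathcomp Require Import ereal topology sequences esum exp.
From Stdlib Require List.
Set Implicit Arguments. Unset Strict Implicit. Unset Printing Implicit Defensive.
Import Order.TTheory GRing.Theory Num.Theory.
Local Open Scope classical_set_scope.
Local Open Scope ring_scope.

Section Trees.
Variable X : finType.

(* [Node a ts] : a vertex of type a whose ordered children subtrees are ts *)
Inductive tree := Node of X & seq tree.

Definition root_type (t : tree) : X := let: Node a _ := t in a.
Definition subtrees (t : tree) : seq tree := let: Node _ ts := t in ts.

Fixpoint tree_enc (t : tree) : GenTree.tree X :=
  let: Node a ts := t in GenTree.Node 0 (GenTree.Leaf a :: map tree_enc ts).

Fixpoint tree_dec (u : GenTree.tree X) : option tree :=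
  match u with
  | GenTree.Node 0 (GenTree.Leaf a :: us) => Some (Node a (pmap tree_dec us))
  | _ => None
  end.

Fixpoint tree_ind' (P : tree -> Prop)
  (H : forall a ts, (forall t, List.In t ts -> P t) -> P (Node a ts)) (t : tree) : P t :=
  match t with
  | Node a ts => H a ts ((fix F (l : seq tree) : forall t, List.In t l -> P t :=
       match l with
       | [::] => fun t (i : List.In t [::]) => False_ind _ i
       | u :: l' => fun t (i : List.In t (u :: l')) =>
           match i with
           | or_introl e => eq_ind u P (tree_ind' H u) t e
           | or_intror i' => F l' t i'
           end
       end) ts)
  end.

Lemma tree_encK : pcancel tree_enc tree_dec.
Proof.
elim/tree_ind' => a ts IH /=; congr (Some (Node a _)).
elim: ts IH => //= u ts IHts IH.
by rewrite IH /=; [rewrite IHts // => t Ht; apply: IH; right | left].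
Qed.

HB.instance Definition _ := Countable.copy tree (pcan_type tree_encK).

Fixpoint tsize (t : tree) : nat :=
  let: Node _ ts := t in (sumn (map tsize ts)).+1.

(* number of vertices v with X(v) = a and C(v) = c (C(v) coded as the
   sequence of children types, which determines N(v)) *)
Fixpoint cntM (t : tree) (a : X) (c : seq X) : nat :=
  let: Node b ts := t in
  ((b == a) && (map root_type ts == c)) + sumn (map (fun u => cntM u a c) ts).

Fixpoint cntL (t : tree) (a b : X) : nat :=
  let: Node a' ts := t in
  (a' == a) * count (fun u => root_type u == b) ts
  + sumn (map (fun u => cntL u a b) ts).
End Trees.

Section Model.
Variable R : realType.
Variable X : finType.

(* a point (varpi, nu) : varpi a finite measure on X x X (a function on the
   finite set), nu a measure on the countable set X x X^* *)
Definition Pt := ((X -> X -> R) * (X -> seq X -> R))%type.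

Definition stat (t : tree X) : Pt :=
  (fun a b => (cntL t a b)%:R / (tsize t)%:R,
   fun a c => (cntM t a c)%:R / (tsize t)%:R).

(* P{ X = t } for the multitype GW tree with initial law mu and kernel Q,
   where Q a c = Q{ c | a } *)
Fixpoint gw_weight (Q : X -> seq X -> R) (t : tree X) : R :=
  let: Node a ts := t in
  Q a (map (@root_type X) ts) *
  (fix prodw (l : seq (tree X)) : R :=
     if l is u :: l' then gw_weight Q u * prodw l' else 1) ts.

Definition gw_prob (mu : X -> R) (Q : X -> seq X -> R) (t : tree X) : R :=
  mu (root_type t) * gw_weight Q t.

Definition condLaw (mu : X -> R) (Q : X -> seq X -> R) (n : nat) (A : set Pt) : R :=
  fine (\esum_(t in [set t | tsize t = n /\ A (stat t)]) (gw_prob mu Q t)%:E)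
  / fine (\esum_(t in [set t | tsize t = n]) (gw_prob mu Q t)%:E).

Definition esumXS (f : X -> seq X -> R) : \bar R :=
  \esum_(x in [set: X * seq X]) (f x.1 x.2)%:E.

Definition integ (f nu : X -> seq X -> R) : R :=
  fine (esumXS (fun a c => Num.max (f a c * nu a c) 0))
  - fine (esumXS (fun a c => Num.max (- (f a c * nu a c)) 0)).

(* M(X x X^ * ): probability measures with finite mean number of children *)
Definition isProbM (nu : X -> seq X -> R) : Prop :=
  (forall a c, 0 <= nu a c) /\ esumXS nu = 1%E /\
  (esumXS (fun a c => ((size c)%:R * nu a c)%R) < +oo)%E.

(* tilde M(X x X) x M(X x X^ * ) *)
Definition FullSpace : set Pt :=
  [set p | (forall a b, 0 <= p.1 a b) /\ isProbM p.2].

Definition subconsistent (p : Pt) : Prop :=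
  forall a b, ((p.1 a b)%:E >=
    \esum_(c in [set: seq X]) ((count_mem b c)%:R * p.2 a c)%:E)%E.

Definition Ms : set Pt := [set p | FullSpace p /\ subconsistent p].

Definition boundedF (f : X -> seq X -> R) : Prop :=
  exists B : R, forall a c, `|f a c| <= B.

(* basic weak neighbourhood of p given by eps and finitely many bounded test
   functions fs for the second component (coordinates for the first) *)
Definition weakNbhd (p : Pt) (k : nat) (fs : 'I_k -> X -> seq X -> R) (eps : R)
  : set Pt :=
  [set q | (forall a b, `|q.1 a b - p.1 a b| < eps) /\
           (forall i, `|integ (fs i) q.2 - integ (fs i) p.2| < eps)].

Definition openIn (S O : set Pt) : Prop :=
  O `<=` S /\
  forall p, O p -> exists (eps : R) (k : nat) (fs : 'I_k -> X -> seq X -> R),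
    0 < eps /\ (forall i, boundedF (fs i)) /\ (S `&` weakNbhd p fs eps `<=` O).

Definition closedIn (S F : set Pt) : Prop := F `<=` S /\ openIn S (S `\` F).

Definition compactIn (S K : set Pt) : Prop :=
  K `<=` S /\
  forall (I : Type) (U : I -> set Pt), (forall i, openIn S (U i)) ->
    K `<=` \bigcup_(i in [set: I]) U i ->
    exists (k : nat) (g : 'I_k -> I), K `<=` \bigcup_(j in [set: 'I_k]) U (g j).

Definition goodRateIn (S : set Pt) (I : Pt -> \bar R) : Prop :=
  (forall p, S p -> (0 <= I p)%E) /\
  (forall alpha : R, closedIn S [set p | S p /\ (I p <= alpha%:E)%E]) /\
  (forall alpha : R, compactIn S [set p | S p /\ (I p <= alpha%:E)%E]).

Definition mix (t : R) (p q : Pt) : Pt :=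
  (fun a b => t * p.1 a b + (1 - t) * q.1 a b,
   fun a c => t * p.2 a c + (1 - t) * q.2 a c).

Definition convexIn (S : set Pt) (I : Pt -> \bar R) : Prop :=
  forall p q t, S p -> S q -> 0 <= t <= 1 ->
    (I (mix t p q) <= t%:E * I p + (1 - t)%:E * I q)%E.

Definition logE (x : R) : \bar R := if x == 0 then -oo%E else (ln x)%:E.

Definition LDP (S : set Pt) (P : nat -> set Pt -> R) (I : Pt -> \bar R) : Prop :=
  (forall F, closedIn S F ->
     (limn_esup (fun n => (n%:R^-1)%:E * logE (P n F)) <= - ereal_inf (I @` F))%E) /\
  (forall G, openIn S G ->
     (- ereal_inf (I @` G) <= limn_einf (fun n => (n%:R^-1)%:E * logE (P n G)))%E).

Definition nu1 (nu : X -> seq X -> R) (a : X) : R :=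
  fine (\esum_(c in [set: seq X]) (nu a c)%:E).

Definition marg_cond (p : Pt) : Prop :=
  forall b, ((\sum_(a : X) p.1 a b)%:E = \esum_(c in [set: seq X]) (p.2 b c)%:E)%E.

Definition relEnt (nu m : X -> seq X -> R) : \bar R :=
  if `[< forall a c, m a c = 0 -> nu a c = 0 >] then
    let h a c := if nu a c == 0 then 0 else nu a c * ln (nu a c / m a c) in
    (esumXS (fun a c => Num.max (h a c) 0%R)
     - esumXS (fun a c => Num.max (- h a c)%R 0%R))%E
  else +oo%E.

Definition nu1Q (Q : X -> seq X -> R) (nu : X -> seq X -> R) : X -> seq X -> R :=
  fun a c => nu1 nu a * Q a c.

Definition Jtilde (Q : X -> seq X -> R) (p : Pt) : \bar R :=
  if `[< marg_cond p >] then relEnt p.2 (nu1Q Q p.2) else +oo%E.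

Definition Jfull (Q : X -> seq X -> R) (p : Pt) : \bar R :=
  if `[< subconsistent p /\ marg_cond p >] then relEnt p.2 (nu1Q Q p.2)
  else +oo%E.
End Model.

(* Main.v *)
Require Import Defs.
From HB Require Import structures.
From mathcomp Require Import all_boot all_order all_algebra.
From mathcomp Require Import all_classical all_reals.
From mathcomp Require Import ereal topology sequences esum exp.
From mathcomp Require Import ring lra.
From Stdlib Require Import Classical.
Import Order.TTheory GRing.Theory Num.Theory.
Local Open Scope classical_set_scope.
Local Open Scope ring_scope.

Section Helpers.
Variable R : realType.

Lemma esum_pt (T : choiceType) (c0 : T) (w : \bar R) : (0 <= w)%E ->
  \esum_(c in [set: T]) (if c == c0 then w else 0%E) = w.
Proof.
move=> w0; transitivity (\esum_(c in [set c0]) w); last exact: esum_set1.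
rewrite [RHS]esum_mkcond; apply: eq_esum => c _.
case: eqP => [->|h]; first by rewrite mem_set. by rewrite memNset.
Qed.

Lemma esumZ_le (T : choiceType) (t : R) (g : T -> \bar R) : 0 <= t ->
  (forall x, (0 <= g x)%E) ->
  (\esum_(x in [set: T]) (t%:E * g x) <= t%:E * \esum_(x in [set: T]) g x)%E.
Proof.
move=> t0 g0; rewrite {1}/esum; apply: ge_ereal_sup => _ [A [finA _] <-].
rewrite -ge0_mule_fsumr //; apply: lee_wpmul2l; first by rewrite lee_fin.
by apply: ereal_sup_ubound; exists A.
Qed.

Lemma In_mem (T : eqType) (x : T) (s : seq T) : x \in s -> List.In x s.
Proof.
elim: s => //= y s IH; rewrite inE => /orP[/eqP ->|h]; [by left|by right; apply: IH].
Qed.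

Lemma cnt_esum (X : finType) (t : tree X) a b (k : R) : 0 <= k ->
  \esum_(c in [set: seq X]) ((count_mem b c)%:R * ((cntM t a c)%:R * k))%:E
  = ((cntL t a b)%:R * k)%:E.
Proof.
move=> k0; elim/tree_ind': t. move=> a0 ts IH /=.
set m := map (@root_type X) ts.
transitivity (\esum_(c in [set: seq X])
   ((if c == m then (((a0 == a) * count_mem b m)%:R * k)%:E else 0%E) +
    \sum_(u <- ts) ((count_mem b c)%:R * ((cntM u a c)%:R * k))%:E)%E).
  apply: eq_esum => c _.
  rewrite sumEFin natrD sumnE big_map natr_sum mulrDl mulrDr big_distrl big_distrr /=.
  rewrite EFinD; congr (_ + _)%E.
  rewrite (eq_sym m c); case: (eqVneq c m) => [->|ne]; last by rewrite andbF mul0r mulr0.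
  rewrite andbT natrM; congr EFin; case: (a0 == a); rewrite /= ?mul1r ?mul0r ?mulr0 ?mul1r /=; lra.
rewrite esumD; last 2 first.
- move=> c _; case: ifP => _ //; rewrite lee_fin mulr_ge0 //.
- move=> c _; apply: sume_ge0 => u _; rewrite lee_fin !mulr_ge0 //.
rewrite esum_sum; last by move=> c u _ _; rewrite lee_fin !mulr_ge0.
rewrite esum_pt; last by rewrite lee_fin mulr_ge0.
rewrite big_seq (eq_bigr (fun u => ((cntL u a b)%:R * k)%:E)); last first.
  by move=> u /In_mem /IH.
rewrite -big_seq sumEFin -EFinD; congr EFin.
rewrite natrD sumnE big_map natr_sum mulrDl big_distrl /= count_map.
done.
Qed.

Lemma stat_subcons (X : finType) (t : tree X) : subconsistent (stat R t).
Proof.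
move=> a b /=; rewrite cnt_esum //; rewrite invr_ge0; exact: ler0n.
Qed.


Lemma esumXS_single (X : finType) (g : X -> seq X -> R) a :
  (forall a' c, 0 <= g a' c) -> (forall a' c, a' != a -> g a' c = 0) ->
  esumXS g = \esum_(c in [set: seq X]) (g a c)%:E.
Proof.
move=> g0 ga; rewrite /esumXS.
have -> : [set: X * seq X] = [set: X] `*`` (fun _ => [set: seq X]) by apply/seteqP; split.
rewrite -(@esum_esum R X (seq X) [set: X] (fun _ => [set: seq X]) (fun x c => (g x c)%:E)); last by move=> *; rewrite lee_fin.
transitivity (\esum_(x in [set: X])
   (if x == a then \esum_(c in [set: seq X]) (g a c)%:E else 0%E)).
  apply: eq_esum => x _; case: eqP => [->//|/eqP ne].
  by apply: esum1 => c _; rewrite ga.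
by apply: esum_pt; apply: esum_ge0 => *; rewrite lee_fin.
Qed.

Definition tf (X : finType) (F : seq (seq X)) (a b : X) : X -> seq X -> R :=
  fun a' c => (a' == a)%:R * \sum_(c' <- F) ((c == c')%:R * (count_mem b c')%:R).
Arguments tf {X}.

Lemma tf_ge0 (X : finType) (F : seq (seq X)) (a b : X) a' c : 0 <= tf F a b a' c.
Proof. by rewrite /tf mulr_ge0 // sumr_ge0 // => i _; rewrite mulr_ge0. Qed.

Lemma integ_tf (X : finType) (F : seq (seq X)) (a b : X) (nu : X -> seq X -> R) :
  (forall a c, 0 <= nu a c) ->
  integ (tf F a b) nu = \sum_(c' <- F) (count_mem b c')%:R * nu a c'.
Proof.
move=> nu0; rewrite /integ.
rewrite (_ : esumXS (fun a' c => Num.max (- (tf F a b a' c * nu a' c)) 0) = 0%E); last first.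
  rewrite /esumXS; apply: esum1 => x _; rewrite max_r // oppr_le0 mulr_ge0 //.
  exact: tf_ge0.
rewrite (@esumXS_single X _ a); last 2 first.
- by move=> a' c; rewrite le_max lexx orbT.
- by move=> a' c ne; rewrite /tf (negbTE ne) !mul0r maxxx.
rewrite /= subr0.
transitivity (fine (\sum_(c' <- F) \esum_(c in [set: seq X])
   (if c == c' then ((count_mem b c')%:R * nu a c')%:E else 0%E))); last first.
  rewrite (eq_bigr (fun c' => ((count_mem b c')%:R * nu a c')%:E)); last first.
    by move=> c' _; rewrite esum_pt // lee_fin mulr_ge0.
  by rewrite sumEFin.
rewrite -esum_sum; last by move=> c c' _ _; case: ifP => // _; rewrite lee_fin mulr_ge0.
congr fine; apply: eq_esum => c _.
rewrite max_l; last by rewrite mulr_ge0 // tf_ge0.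
rewrite /tf eqxx mul1r big_distrl /= -sumEFin; apply: eq_bigr => c' _.
by case: (eqVneq c c') => [->|_]; rewrite ?mul1r ?mul0r.
Qed.


Lemma arith_key (x y z w : R) : -((x-w)/2) < z - w -> z - w < (x-w)/2 ->
    -((x-w)/2) < y - x -> y - x < (x-w)/2 -> z < y.
Proof. move=> *; lra. Qed.

Lemma not_subcons_open (X : finType) (p : Pt R X) : @FullSpace R X p -> ~ subconsistent p ->
  exists (eps : R) (k : nat) (fs : 'I_k -> X -> seq X -> R),
    0 < eps /\ (forall i, boundedF (fs i)) /\
    (@FullSpace R X `&` weakNbhd p fs eps `<=` [set q | ~ subconsistent q]).
Proof.
move=> [_ [p20 _]] ns.
have [a /not_all_ex_not [b hab]] := not_all_ex_not _ _ ns.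
have hlt : ((p.1 a b)%:E < \esum_(c in [set: seq X]) ((count_mem b c)%:R * p.2 a c)%:E)%E.
  by rewrite ltNge; apply/negP.
move: hlt; rewrite {1}/esum => /ereal_sup_gt [_ [A [finA _] <-] hA].
rewrite fsbig_finite //= sumEFin lte_fin in hA.
set F := finmap.enum_fset (fset_set A) in hA.
set d := \sum_(c <- F) (count_mem b c)%:R * p.2 a c - p.1 a b.
have d0 : 0 < d by rewrite /d subr_gt0.
exists (d / 2), 1, (fun _ => tf F a b).
split; first by rewrite divr_gt0.
split.
  move=> _; exists (\sum_(c' <- F) (count_mem b c')%:R) => a' c.
  rewrite ger0_norm ?tf_ge0 // /tf.
  case: (a' == a) => /=; last by rewrite mul0r sumr_ge0.
  rewrite mul1r; apply: ler_sum => c' _.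
  by case: (c == c'); rewrite /= ?mul1r ?mul0r.
move=> q [[_ [q20 _]] [h1 h2]] hq.
have := h2 ord0; rewrite !integ_tf //.
have := h1 a b; rewrite !ltr_norml => /andP[h3 h4] /andP[h5 h6].
have hl : q.1 a b < \sum_(c <- F) (count_mem b c)%:R * q.2 a c.
  exact: arith_key h3 h4 h5 h6.
have hle : ((\sum_(c <- F) (count_mem b c)%:R * q.2 a c)%:E <=
   \esum_(c in [set: seq X]) ((count_mem b c)%:R * q.2 a c)%:E)%E.
  by apply: esum_ge; exists A => //; rewrite fsumEFin // fsbig_finite.
have h := le_trans hle (hq a b); rewrite lee_fin in h.
by move: (lt_le_trans hl h); rewrite ltxx.
Qed.


Lemma mix_subcons (X : finType) (p q : Pt R X) (t : R) :
  (forall a c, 0 <= p.2 a c) -> (forall a c, 0 <= q.2 a c) -> 0 <= t <= 1 ->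
  subconsistent p -> subconsistent q -> subconsistent (mix t p q).
Proof.
move=> p0 q0 /andP[t0 t1] hp hq a b /=.
have t1' : 0 <= 1 - t by rewrite subr_ge0.
have -> : \esum_(c in [set: seq X]) ((count_mem b c)%:R * (t * p.2 a c + (1 - t) * q.2 a c))%:E
  = \esum_(c in [set: seq X]) (t%:E * ((count_mem b c)%:R * p.2 a c)%:E
        + (1 - t)%:E * ((count_mem b c)%:R * q.2 a c)%:E)%E.
  by apply: eq_esum => c _; rewrite -!EFinM -EFinD; congr EFin; ring.
rewrite esumD; last 2 first.
- by move=> c _; rewrite -EFinM lee_fin !mulr_ge0.
- by move=> c _; rewrite -EFinM lee_fin !mulr_ge0.
rewrite (EFinD (t * _)) (EFinM t) (EFinM (1 - t)); apply: leeD.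
- apply: (le_trans (@esumZ_le (seq X) t (fun c => ((count_mem b c)%:R * p.2 a c)%:E) t0 _)); first by move=> c; rewrite lee_fin mulr_ge0.
  by apply: lee_wpmul2l; [rewrite lee_fin|exact: hp].
- apply: (le_trans (@esumZ_le (seq X) (1 - t) (fun c => ((count_mem b c)%:R * q.2 a c)%:E) t1' _)); first by move=> c; rewrite lee_fin mulr_ge0.
  by apply: lee_wpmul2l; [rewrite lee_fin|exact: hq].
Qed.


Section Main.
Variable X : finType.

Lemma Jfull_eq (Q : X -> seq X -> R) (p : Pt R X) :
  subconsistent p -> Jfull Q p = Jtilde Q p.
Proof.
move=> hs; rewrite /Jfull /Jtilde; case: (asboolP (marg_cond p)) => hm.
  by rewrite asboolT.
by rewrite asboolF // => -[].
Qed.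

Lemma Jfull_oo (Q : X -> seq X -> R) (p : Pt R X) :
  ~ subconsistent p -> Jfull Q p = +oo%E.
Proof. by move=> hs; rewrite /Jfull asboolF // => -[]. Qed.

Lemma condLaw_Ms mu Q n (A : set (Pt R X)) : A `<=` @FullSpace R X ->
  condLaw mu Q n A = condLaw mu Q n (A `&` @Ms R X).
Proof.
move=> sA; rewrite /condLaw; congr (fine (esum _ _) / _).
apply/seteqP; split => t /= [hn hA]; split => //; last by case: hA.
by split => //; split; [exact: sA|exact: stat_subcons].
Qed.

Lemma inf_Ms (Q : X -> seq X -> R) (A : set (Pt R X)) : A `<=` @FullSpace R X ->
  ereal_inf (Jfull Q @` A) = ereal_inf (Jtilde Q @` (A `&` @Ms R X)).
Proof.
move=> sA; apply/eqP; rewrite eq_le; apply/andP; split.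
  apply: le_ereal_inf_tmp => _ [p [hA hM] <-]; rewrite -Jfull_eq; last exact: hM.2.
  by apply: ereal_inf_lbound; exists p.
apply: le_ereal_inf_tmp => _ [p hA <-]; case: (classic (subconsistent p)) => hs.
  rewrite Jfull_eq //; apply: ereal_inf_lbound; exists p => //.
  by split => //; split => //; exact: sA.
by rewrite Jfull_oo // leey.
Qed.

Lemma openIn_Ms (G : set (Pt R X)) : openIn (@FullSpace R X) G -> openIn (@Ms R X) (G `&` @Ms R X).
Proof.
move=> [sG oG]; split; first by move=> p [].
move=> p [hG hM]; have [eps [k [fs [e0 [bd sub]]]]] := oG p hG.
exists eps, k, fs; split => //; split => //.
move=> q [hMq hN]; split => //; apply: sub; split => //; exact: hMq.1.
Qed.

Lemma closedIn_Ms (F : set (Pt R X)) : closedIn (@FullSpace R X) F -> closedIn (@Ms R X) (F `&` @Ms R X).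
Proof.
move=> [sF [_ oF]]; split; first by move=> p [].
split; first by move=> p [].
move=> p [hM hnF].
have hp : (@FullSpace R X `\` F) p.
  by split; [exact: hM.1|move=> hF; apply: hnF; split].
have [eps [k [fs [e0 [bd sub]]]]] := oF p hp.
exists eps, k, fs; split => //; split => //.
move=> q [hMq hN]; have [_ hnq] := sub q (conj hMq.1 hN).
by split => // -[].
Qed.

Lemma lvl (Q : X -> seq X -> R) (alpha : R) :
  [set p | @FullSpace R X p /\ (Jfull Q p <= alpha%:E)%E] =
  [set p | @Ms R X p /\ (Jtilde Q p <= alpha%:E)%E].
Proof.
apply/seteqP; split => p [h1 h2].
  have hs : subconsistent p.
    case: (classic (subconsistent p)) => // hn.
    by move: h2; rewrite Jfull_oo // leNgt ltry.
  by split; [split|rewrite -Jfull_eq].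
by split; [exact: h1.1|rewrite Jfull_eq //; exact: h1.2].
Qed.

Lemma mix0 (p q : Pt R X) : mix 0 p q = q.
Proof.
rewrite /mix; case: q => q1 q2 /=; congr pair; apply/funext => a; apply/funext => b;
  by rewrite mul0r add0r subr0 mul1r.
Qed.

Lemma mix1 (p q : Pt R X) : mix 1 p q = p.
Proof.
rewrite /mix; case: p => p1 p2 /=; congr pair; apply/funext => a; apply/funext => b;
  by rewrite subrr mul0r addr0 mul1r.
Qed.

End Main.

End Helpers.
Arguments Jfull_eq {R X}. Arguments Jfull_oo {R X}. Arguments condLaw_Ms {R X}.
Arguments inf_Ms {R X}. Arguments openIn_Ms {R X}. Arguments closedIn_Ms {R X}.
Arguments lvl {R X}. Arguments mix0 {R X}. Arguments mix1 {R X}.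
Arguments not_subcons_open {R X}. Arguments mix_subcons {R X}.

Theorem lemma3p2 (R : realType) (X : finType) (mu : X -> R) (Q : X -> seq X -> R)
  (mu_ge0 : forall a, 0 <= mu a) (mu_sum1 : \sum_(a : X) mu a = 1)
  (Q_ge0 : forall a c, 0 <= Q a c)
  (Q_sum1 : forall a, \esum_(c in [set: seq X]) (Q a c)%:E = 1%E) :
  LDP (@Ms R X) (condLaw mu Q) (Jtilde Q) ->
  goodRateIn (@Ms R X) (Jtilde Q) -> convexIn (@Ms R X) (Jtilde Q) ->
  LDP (@FullSpace R X) (condLaw mu Q) (Jfull Q) /\
  goodRateIn (@FullSpace R X) (Jfull Q) /\ convexIn (@FullSpace R X) (Jfull Q).
Proof.
move=> [ldpU ldpL] [g0 [gC gK]] cvx.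
have J0 : forall p, @FullSpace R X p -> (0 <= Jfull Q p)%E.
  move=> p hp; case: (classic (subconsistent p)) => hs.
    by rewrite Jfull_eq //; apply: g0; split.
  by rewrite Jfull_oo.
split.
  split.
    move=> F cF; have sF := cF.1.
    rewrite (inf_Ms Q _ sF).
    have E n : condLaw mu Q n F = condLaw mu Q n (F `&` @Ms R X) by exact: condLaw_Ms.
    under eq_fun do rewrite E.
    exact: ldpU (closedIn_Ms _ cF).
  move=> G oG; have sG := oG.1.
  rewrite (inf_Ms Q _ sG).
  have E n : condLaw mu Q n G = condLaw mu Q n (G `&` @Ms R X) by exact: condLaw_Ms.
  under eq_fun do rewrite E.
  exact: ldpL (openIn_Ms _ oG).
split.
  split; first exact: J0.
  split.
    move=> alpha; rewrite lvl; have [sK [_ oK]] := gC alpha.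
    split; first by move=> p [[]].
    split; first by move=> p [].
    move=> p [hF hnK]; case: (classic (subconsistent p)) => hs.
      have hp : (@Ms R X `\` [set p | @Ms R X p /\ (Jtilde Q p <= alpha%:E)%E]) p.
        by split; [split|].
      have [eps [k [fs [e0 [bd sub]]]]] := oK p hp.
      exists eps, k, fs; split => //; split => //.
      move=> q [hFq hN]; split => // hKq.
      by have [_] := sub q (conj hKq.1 hN); apply.
    have [eps [k [fs [e0 [bd sub]]]]] := not_subcons_open _ hF hs.
    exists eps, k, fs; split => //; split => //.
    move=> q [hFq hN]; split => // hKq.
    by apply: (sub q (conj hFq hN)); exact: hKq.1.2.
  move=> alpha; rewrite lvl; have [sK cK] := gK alpha.
  split; first by move=> p [[]].
  move=> I U oU cov.
  have [|k [g hg]] := cK I (fun i => U i `&` @Ms R X) (fun i => openIn_Ms _ (oU i)).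
    move=> p hK; have [i _ hi] := cov p hK; exists i => //; split => //; exact: hK.1.
  exists k, g => p /hg [j _ [hj _]]; by exists j.
move=> p q t hp hq /andP[t0 t1].
have [->|tn0] := eqVneq t 0.
  by rewrite mix0 mul0e add0e subr0 mul1e.
have [->|tn1] := eqVneq t 1.
  by rewrite mix1 mul1e subrr mul0e adde0.
have tp : 0 < t by rewrite lt_neqAle eq_sym tn0 t0.
have tq : 0 < 1 - t by rewrite subr_gt0 lt_neqAle tn1 t1.
case: (classic (subconsistent p /\ subconsistent q)) => [[hsp hsq]|hn].
  have hm : subconsistent (mix t p q).
    by apply: (mix_subcons _ _ _ hp.2.1 hq.2.1 _ hsp hsq); rewrite t0 t1.
  rewrite (Jfull_eq Q _ hm) (Jfull_eq Q _ hsp) (Jfull_eq Q _ hsq).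
  apply: cvx; first by split.
    by split.
  by rewrite t0 t1.
have ge1 : (0 <= t%:E * Jfull Q p)%E by apply: mule_ge0; [rewrite lee_fin ltW|apply: J0].
have ge2 : (0 <= (1 - t)%:E * Jfull Q q)%E by apply: mule_ge0; [rewrite lee_fin ltW|apply: J0].
case: (classic (subconsistent p)) => hsp0.
  have hsq0 : ~ subconsistent q by move=> h; apply: hn.
  rewrite (Jfull_oo Q _ hsq0) mulry gtr0_sg // mul1e addey ?leey //.
  by apply: contraTneq ge1 => ->.
rewrite (Jfull_oo Q _ hsp0) mulry gtr0_sg // mul1e addye ?leey //.
by apply: contraTneq ge2 => ->.
Qed.
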